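(* Let $g\geq 2$ and let $\mathfrak t_{(g)}(1)$ be the Lie algebra over a field $\mathbb K$ of characteristic zero generated by $x_1,\dots,x_g,y_1,\dots,y_g,t_{11}$ subject to the relations that $t_{11}$ is central and $\sum_{k=1}^g[x_k,y_k]=-(2-2g)t_{11}$. Then the center of $\mathfrak t_{(g)}(1)$ is one-dimensional, spanned by $t_{11}$. *)

(* Defs.v *)
From mathcomp Require Import all_boot all_order all_algebra.
Set Implicit Arguments. Unset Strict Implicit. Unset Printing Implicit Defensive.
Import GRing.Theory.
Local Open Scope ring_scope.

Definition is_lie_bracket (K : fieldType) (V : lmodType K) (br : V -> V -> V) : Prop :=
  [/\ (forall (a : K) (u v w : V), br (a *: u + v) w = a *: br u w + br v w),
      (forall (a : K) (u v w : V), br u (a *: v + w) = a *: br u v + br u w),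
      (forall u : V, br u u = 0) &
      (forall u v w : V, br u (br v w) + br v (br w u) + br w (br u v) = 0)].

Definition tg1_relations (K : fieldType) (g : nat) (V : lmodType K)
    (br : V -> V -> V) (x y : 'I_g -> V) (t : V) : Prop :=
  [/\ (forall k, br t (x k) = 0),
      (forall k, br t (y k) = 0) &
      \sum_(k < g) br (x k) (y k) = - ((2%:R - (2 * g)%:R : K) *: t)].

Definition lie_generated (K : fieldType) (V : lmodType K) (br : V -> V -> V)
    (S : V -> Prop) : Prop :=
  forall P : V -> Prop,
    (forall v, S v -> P v) -> P 0 ->
    (forall (a : K) u v, P u -> P v -> P (a *: u + v)) ->
    (forall u v, P u -> P v -> P (br u v)) ->
    forall v, P v.

Definition is_tg1 (K : fieldType) (g : nat) (L : lmodType K)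
    (brL : L -> L -> L) (x y : 'I_g -> L) (t : L) : Prop :=
  [/\ is_lie_bracket brL,
      tg1_relations brL x y t,
      lie_generated brL (fun v => (exists k, v = x k) \/ (exists k, v = y k) \/ v = t) &
      forall (M : lmodType K) (brM : M -> M -> M) (x' y' : 'I_g -> M) (t' : M),
        is_lie_bracket brM -> tg1_relations brM x' y' t' ->
        exists f : L -> M,
          [/\ (forall (a : K) u v, f (a *: u + v) = a *: f u + f v),
              (forall u v, f (brL u v) = brM (f u) (f v)),
              (forall k, f (x k) = x' k),
              (forall k, f (y k) = y' k) &
              f t = t']].

(* Main.v *)
Require Import Defs.
From mathcomp Require Import all_boot all_order all_algebra.
From mathcomp Require Import finmap.
From mathcomp.multinomials Require Import monalg.
From mathcomp Require Import boolp functions.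
From mathcomp Require Import ring zify.
Set Warnings "-notation-overridden -notation-incompatible-prefix -ambiguous-paths".
Set Implicit Arguments. Unset Strict Implicit. Unset Printing Implicit Defensive.
Import GRing.Theory.
Local Open Scope fset_scope.
Local Open Scope ring_scope.

Section LieFacts.
Variables (K : fieldType) (W : lmodType K) (br : W -> W -> W).
Hypothesis HB : is_lie_bracket br.

Lemma brLl a u v w : br (a *: u + v) w = a *: br u w + br v w.
Proof. by case: HB. Qed.
Lemma brLr a u v w : br u (a *: v + w) = a *: br u v + br u w.
Proof. by case: HB. Qed.
Lemma bralt u : br u u = 0. Proof. by case: HB. Qed.
Lemma brjac u v w : br u (br v w) + br v (br w u) + br w (br u v) = 0.
Proof. by case: HB. Qed.

Lemma br0l w : br 0 w = 0.
Proof.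
have := brLl 1 0 0 w; rewrite !scale1r addr0.
by move/(congr1 (fun z => z - br 0 w)) => /=; rewrite subrr addrK => <-.
Qed.
Lemma br0r w : br w 0 = 0.
Proof.
have := brLr 1 w 0 0; rewrite !scale1r addr0.
by move/(congr1 (fun z => z - br w 0)) => /=; rewrite subrr addrK => <-.
Qed.
Lemma brDl u v w : br (u + v) w = br u w + br v w.
Proof. by rewrite -[u]scale1r brLl !scale1r. Qed.
Lemma brDr u v w : br w (u + v) = br w u + br w v.
Proof. by rewrite -[u]scale1r brLr !scale1r. Qed.
Lemma brZl a u w : br (a *: u) w = a *: br u w.
Proof. by rewrite -[a *: u]addr0 brLl br0l addr0. Qed.
Lemma brZr a u w : br w (a *: u) = a *: br w u.
Proof. by rewrite -[a *: u]addr0 brLr br0r addr0. Qed.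
Lemma brNl u w : br (- u) w = - br u w.
Proof. by rewrite -scaleN1r brZl scaleN1r. Qed.
Lemma brNr u w : br w (- u) = - br w u.
Proof. by rewrite -scaleN1r brZr scaleN1r. Qed.
Lemma brBl u v w : br (u - v) w = br u w - br v w.
Proof. by rewrite brDl brNl. Qed.
Lemma brBr u v w : br w (u - v) = br w u - br w v.
Proof. by rewrite brDr brNr. Qed.
Lemma brC u v : br u v = - br v u.
Proof.
have := bralt (u + v); rewrite brDl !brDr !bralt add0r addr0 => /eqP.
by rewrite addr_eq0 => /eqP.
Qed.
Lemma br_suml (I : Type) (r : seq I) (F : I -> W) w :
  br (\sum_(i <- r) F i) w = \sum_(i <- r) br (F i) w.
Proof.
elim: r => [|i r IH]; first by rewrite !big_nil br0l.
by rewrite !big_cons brDl IH.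
Qed.
Lemma br_sumr (I : Type) (r : seq I) (F : I -> W) w :
  br w (\sum_(i <- r) F i) = \sum_(i <- r) br w (F i).
Proof.
elim: r => [|i r IH]; first by rewrite !big_nil br0r.
by rewrite !big_cons brDr IH.
Qed.
Lemma brjac2 u v w : br u (br v w) - br v (br u w) = br (br u v) w.
Proof.
have := brjac u v w; rewrite [br w (br u v)]brC [br w u]brC brNr.
by move/eqP; rewrite subr_eq0 => /eqP <-.
Qed.
End LieFacts.

Section Ext.
Variables (K : fieldType) (T : choiceType).
Local Notation V := {malg K[T]}.

Definition extG (W : lmodType K) (h : T -> W) (v : V) : W :=
  \sum_(k <- msupp v) v@_k *: h k.

Variable W : lmodType K.
Implicit Types (h : T -> W) (u v : V).

Lemma extGEw h v (D : {fset T}) : msupp v `<=` D ->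
  extG h v = \sum_(k <- D) v@_k *: h k.
Proof.
move=> sD; rewrite /extG; apply: big_fset_incl => // k _ kn.
by rewrite mcoeff_outdom // scale0r.
Qed.

Lemma extG_lin h a u v : extG h (a *: u + v) = a *: extG h u + extG h v.
Proof.
set D := msupp u `|` msupp v.
have s1 : msupp (a *: u + v) `<=` D.
  apply/fsubsetP => k; rewrite in_fsetU -!mcoeff_neq0 mcoeffD mcoeffZ.
  apply: contraR; rewrite negb_or !negbK => /andP[/eqP-> /eqP->].
  by rewrite mulr0 addr0.
rewrite (extGEw h s1) (@extGEw h u D) ?fsubsetUl // (@extGEw h v D) ?fsubsetUr //.
rewrite scaler_sumr -big_split /=; apply: eq_bigr => k _.
by rewrite mcoeffD mcoeffZ scalerDl scalerA.
Qed.

Lemma extG0 h : extG h 0 = 0.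
Proof. by rewrite /extG big1 // => k _; rewrite mcoeff0 scale0r. Qed.

Lemma extGD h u v : extG h (u + v) = extG h u + extG h v.
Proof. by rewrite -[u]scale1r extG_lin !scale1r. Qed.
Lemma extGZ h a u : extG h (a *: u) = a *: extG h u.
Proof. by rewrite -[a *: u]addr0 extG_lin extG0 addr0. Qed.
Lemma extGN h u : extG h (- u) = - extG h u.
Proof. by rewrite -[- u]scaleN1r extGZ scaleN1r. Qed.
Lemma extGB h u v : extG h (u - v) = extG h u - extG h v.
Proof. by rewrite extGD extGN. Qed.
Lemma extG_sum h (I : Type) (r : seq I) (F : I -> V) :
  extG h (\sum_(i <- r) F i) = \sum_(i <- r) extG h (F i).
Proof.
elim: r => [|i r IH]; first by rewrite !big_nil extG0.
by rewrite !big_cons extGD IH.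
Qed.
Lemma extG_sumP h (I : finType) (P : pred I) (F : I -> V) :
  extG h (\sum_(i | P i) F i) = \sum_(i | P i) extG h (F i).
Proof.
rewrite -big_filter extG_sum big_filter //.
Qed.

Lemma extGU h k : extG h << k >> = h k.
Proof.
by rewrite /extG msuppU oner_eq0 big_seq_fset1 mcoeffUU scale1r.
Qed.

Lemma extG_hlin a h1 h2 v :
  extG (fun k => a *: h1 k + h2 k) v = a *: extG h1 v + extG h2 v.
Proof.
rewrite /extG scaler_sumr -big_split /=; apply: eq_bigr => k _.
by rewrite scalerDr !scalerA mulrC.
Qed.

Lemma extG_hB h1 h2 v :
  extG (fun k => h1 k - h2 k) v = extG h1 v - extG h2 v.
Proof.
rewrite /extG -sumrB; apply: eq_bigr => k _.
by rewrite scalerBr.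
Qed.

Lemma extG_h0 v : extG (fun _ => 0 : W) v = 0.
Proof. by rewrite /extG big1 // => k _; rewrite scaler0. Qed.

Lemma extG_comp (F : T -> W) (h : T -> V) v :
  extG F (extG h v) = extG (fun k => extG F (h k)) v.
Proof.
rewrite [extG h v]/extG extG_sum; apply: eq_bigr => k _.
by rewrite extGZ.
Qed.

Lemma extG_coef (h : T -> V) v (w : T) :
  (extG h v)@_w = \sum_(k <- msupp v) v@_k * (h k)@_w.
Proof.
rewrite /extG; elim/big_rec2: _ => [|k y1 y2 _ <-]; first by rewrite mcoeff0.
by rewrite mcoeffD mcoeffZ.
Qed.

Lemma mcoeffU1 (k u : T) : (<< k >> : V)@_u = (k == u)%:R.
Proof. by rewrite mcoeffU. Qed.

Lemma extG_inj_coef (m : T -> T) v (u : T) : injective m ->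
  (extG (fun k => << m k >>) v)@_(m u) = v@_u.
Proof.
move=> mi; rewrite extG_coef.
have [uin|unot] := boolP (u \in msupp v).
  rewrite (big_fsetD1 u) //= mcoeffU1 eqxx mulr1 big1_fset ?addr0 //.
  move=> k; rewrite in_fsetD1 => /andP[ku _] _.
  by rewrite mcoeffU1 (inj_eq mi) (negbTE ku) mulr0.
rewrite (mcoeff_outdom unot) big1_fset // => k kin _.
rewrite mcoeffU1 (inj_eq mi); case: eqP => [ek|]; last by rewrite mulr0.
by rewrite -ek kin in unot.
Qed.

Lemma extG_notin_coef (m : T -> T) v (u : T) : (forall k, m k != u) ->
  (extG (fun k => << m k >>) v)@_u = 0.
Proof.
move=> mu; rewrite extG_coef big1_fset // => k _ _.
by rewrite mcoeffU1 (negbTE (mu k)) mulr0.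
Qed.

End Ext.

Lemma zjac (Z : zmodType) (a b c d e f : Z) :
  (a - b - (c - d)) + (c - e - (f - b)) + (f - d - (a - e)) = 0.
Proof.
rewrite !opprB !addrA.
rewrite (@GRing.add Z).[ACl ((1*12)*(2*7)*(3*10)*(4*5)*(6*11)*(8*9))].
by rewrite /= !(addrN, addNr, addr0).
Qed.

Section OpLie.
Variables (K : fieldType) (T : choiceType).
Local Notation V := {malg K[T]}.
Local Notation Op := (T -> V).

Definition brM (A B : Op) : Op := fun w => extG A (B w) - extG B (A w).

Lemma extG_brM (A B : Op) v : extG (brM A B) v = extG A (extG B v) - extG B (extG A v).
Proof.
rewrite /brM extG_hB !extG_comp //.
Qed.

Lemma extG_hlinF (W : lmodType K) (A B : T -> W) a v :
  extG (a *: A + B) v = a *: extG A v + extG B v.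
Proof. exact: extG_hlin. Qed.

Lemma extG_hzero (W : lmodType K) v : extG (0 : T -> W) v = 0.
Proof. exact: extG_h0. Qed.

Lemma brM_lie : is_lie_bracket brM.
Proof.
split.
- move=> a A B C; apply/funext => w; rewrite /brM /= extG_hlinF extG_lin.
  by rewrite scalerBr opprD addrACA.
- move=> a A B C; apply/funext => w; rewrite /brM /= extG_hlinF extG_lin.
  by rewrite scalerBr opprD addrACA.
- by move=> A; apply/funext => w; rewrite /brM subrr.
- move=> A B C; apply/funext => w.
  change (brM A (brM B C) w + brM B (brM C A) w + brM C (brM A B) w = 0).
  rewrite {1 3 5}/brM !extG_brM !extGB.
  exact: zjac.
Qed.

End OpLie.

Section Rep.
Variables (K : fieldType) (g : nat) (i0 i1 : 'I_g).
Hypothesis hi : i0 != i1.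
Definition letter := (bool * 'I_g)%type.
Definition word := seq letter.
Local Notation V := {malg K[word]}.
Local Notation Op := (word -> V).

Definition xl k : letter := (false, k).
Definition yl k : letter := (true, k).
Definition pre (l : letter) : Op := fun w => << l :: w >>.
Definition app (l : letter) : Op := fun w => << rcons w l >>.

Definition Sg (w : word) : V :=
  \sum_(k < g | k != i0) (<< [:: xl k, yl k & w] >> - << [:: yl k, xl k & w] >>).

Fixpoint X1 (w : word) : V :=
  match w with
  | [::] => << [:: xl i0] >>
  | l :: w' => if l == yl i0 then extG (pre (yl i0)) (X1 w') - Sg w'
               else << xl i0 :: l :: w' >>
  end.

Definition Xop k : Op := if k == i0 then X1 else pre (xl k).
Definition Yop k : Op := pre (yl k).

Lemma rel_rep : \sum_(k < g) brM (Xop k) (Yop k) = 0.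
Proof.
apply/funext => w; rewrite fct_sumE (bigD1 i0) //=.
rewrite /brM /Xop /Yop eqxx extGU /= eqxx [extG _ (X1 w) - Sg w - _]addrAC subrr add0r addrC.
apply/eqP; rewrite subr_eq0; apply/eqP.
apply: eq_bigr => k kn.
by rewrite (negbTE kn) !extGU /pre.
Qed.


Lemma extG_eqh (W : lmodType K) (h1 h2 : word -> W) v :
  (forall k, h1 k = h2 k) -> extG h1 v = extG h2 v.
Proof. by move=> e; rewrite /extG; apply: eq_bigr => k _; rewrite e. Qed.

Definition posop (A : Op) := forall w, (A w)@_[::] = 0.

Lemma ext_pos (h : Op) v : posop h -> (extG h v)@_[::] = 0.
Proof. by move=> H; rewrite extG_coef big1 // => k _; rewrite H mulr0. Qed.

Lemma pre_pos l : posop (pre l).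
Proof. by move=> w; rewrite /pre mcoeffU. Qed.

Lemma Sg_pos w : (Sg w)@_[::] = 0.
Proof.
rewrite /Sg; elim/big_rec: _ => [|k s _ IH]; first by rewrite mcoeff0.
by rewrite mcoeffD mcoeffB !mcoeffU IH subrr addr0.
Qed.

Lemma X1_pos : posop X1.
Proof.
elim => [|l w IH] /=; first by rewrite mcoeffU.
case: ifP => _; last by rewrite mcoeffU.
by rewrite mcoeffB ext_pos ?Sg_pos ?subr0 //; exact: pre_pos.
Qed.

Lemma Xop_pos k : posop (Xop k).
Proof. rewrite /Xop; case: ifP => _; [exact: X1_pos | exact: pre_pos]. Qed.
Lemma Yop_pos k : posop (Yop k).
Proof. exact: pre_pos. Qed.

Lemma posop_lin a A B : posop A -> posop B -> posop (a *: A + B).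
Proof. by move=> hA hB w /=; rewrite mcoeffD mcoeffZ hA hB mulr0 addr0. Qed.
Lemma posop_br A B : posop A -> posop B -> posop (brM A B).
Proof. by move=> hA hB w; rewrite /brM mcoeffB !ext_pos // subrr. Qed.
Lemma posop0 : posop 0.
Proof. by move=> w; rewrite /= mcoeff0. Qed.

Definition comm l (A : Op) := forall w, A (rcons w l) = extG (app l) (A w).

Lemma comm_ext l A : comm l A ->
  forall v, extG A (extG (app l) v) = extG (app l) (extG A v).
Proof.
move=> hA v; rewrite !extG_comp; apply: extG_eqh => k.
by rewrite /app extGU hA.
Qed.

Lemma comm_lin l a A B : comm l A -> comm l B -> comm l (a *: A + B).
Proof.
move=> hA hB w.
change (a *: A (rcons w l) + B (rcons w l) = extG (app l) (a *: A w + B w)).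
by rewrite hA hB extG_lin.
Qed.
Lemma comm_br l A B : comm l A -> comm l B -> comm l (brM A B).
Proof.
move=> hA hB w; rewrite /brM hA hB !comm_ext // extGB //.
Qed.
Lemma comm0 l : comm l 0.
Proof. by move=> w /=; rewrite extG0. Qed.

Lemma comm_pre l l' : comm l (pre l').
Proof. by move=> w; rewrite /pre extGU. Qed.

Lemma Sg_app l w : Sg (rcons w l) = extG (app l) (Sg w).
Proof.
rewrite /Sg extG_sumP; apply: eq_bigr => k _.
by rewrite extGB !extGU.
Qed.

Lemma X1_app l : l != yl i0 -> comm l X1.
Proof.
move=> hl; elim => [|l' w IH] /=.
  by rewrite (negbTE hl) extGU.
case: ifP => _; last by rewrite extGU.
rewrite IH extGB Sg_app comm_ext //; exact: comm_pre.
Qed.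

Lemma Xop_app l k : l != yl i0 -> comm l (Xop k).
Proof. move=> hl; rewrite /Xop; case: ifP => _; [exact: X1_app | exact: comm_pre]. Qed.

End Rep.

Section Main.
Variables (K : fieldType) (g : nat) (L : lmodType K) (brL : L -> L -> L)
  (x y : 'I_g -> L) (t : L) (i0 i1 : 'I_g).
Hypothesis hi : i0 != i1.
Hypothesis HL : is_lie_bracket brL.
Hypothesis Hrel : tg1_relations brL x y t.
Hypothesis Hgen : lie_generated brL
  (fun v => (exists k, v = x k) \/ (exists k, v = y k) \/ v = t).
Local Notation V := {malg K[word g]}.
Local Notation Op := (word g -> V).
Local Notation cc := (2%:R - (2 * g)%:R : K).
Local Notation pre := (pre K).
Local Notation app := (app K).
Local Notation X1 := (X1 K i0).
Local Notation Xop := (Xop K i0).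
Local Notation Yop := (Yop K).
Local Notation Sg := (Sg K i0).

Lemma tcentral v : brL t v = 0.
Proof.
case: Hrel => hx hy _.
elim/Hgen: v.
- move=> v [[k ->]|[[k ->]| ->]] //; exact: bralt.
- exact: br0r.
- by move=> a u v hu hv; rewrite brLr // hu hv scaler0 addr0.
- move=> u v hu hv; have := brjac2 HL t u v.
  by rewrite hu hv br0l // br0r // subr0.
Qed.

Lemma Omega : \sum_(k < g) brL (x k) (y k) = - (cc *: t).
Proof. by case: Hrel. Qed.

Definition eqt (a b : L) := exists c : K, a = b + c *: t.

Lemma eqt_refl a : eqt a a.
Proof. by exists 0; rewrite scale0r addr0. Qed.
Lemma eqt_eq a b : a = b -> eqt a b.
Proof. move->; exact: eqt_refl. Qed.
Lemma eqt_trans a b d : eqt a b -> eqt b d -> eqt a d.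
Proof.
move=> [c1 ->] [c2 ->]; exists (c2 + c1).
by rewrite scalerDl addrA.
Qed.
Lemma eqt_lin a u1 v1 u2 v2 : eqt u1 v1 -> eqt u2 v2 ->
  eqt (a *: u1 + u2) (a *: v1 + v2).
Proof.
move=> [c1 ->] [c2 ->]; exists (a * c1 + c2).
by rewrite scalerDr scalerA scalerDl addrACA.
Qed.
Lemma eqt_add u1 v1 u2 v2 : eqt u1 v1 -> eqt u2 v2 -> eqt (u1 + u2) (v1 + v2).
Proof. by move=> h1 h2; have := eqt_lin 1 h1 h2; rewrite !scale1r. Qed.
Lemma eqt_sub u1 v1 u2 v2 : eqt u1 v1 -> eqt u2 v2 -> eqt (u1 - u2) (v1 - v2).
Proof.
move=> h1 h2; have := eqt_lin (-1) h2 h1.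
by rewrite !scaleN1r ![- _ + _]addrC.
Qed.
Lemma eqt_scale a u v : eqt u v -> eqt (a *: u) (a *: v).
Proof.
move=> h; have := eqt_lin a h (eqt_refl 0); by rewrite !addr0.
Qed.
Lemma eqt_br u a b : eqt a b -> eqt (brL u a) (brL u b).
Proof.
move=> [c ->]; apply: eqt_eq.
by rewrite brDr // brZr // (brC HL u t) tcentral oppr0 scaler0 addr0.
Qed.
Lemma eqt_sum (I : eqType) (r : seq I) (F G : I -> L) :
  (forall i, i \in r -> eqt (F i) (G i)) ->
  eqt (\sum_(i <- r) F i) (\sum_(i <- r) G i).
Proof.
elim: r => [|i r IH] h; first by rewrite !big_nil; exact: eqt_refl.
rewrite !big_cons; apply: eqt_add; first by apply: h; rewrite mem_head.
by apply: IH => j jr; apply: h; rewrite in_cons jr orbT.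
Qed.

Definition gen (l : letter g) : L := if l.1 then y l.2 else x l.2.

Fixpoint rn (w : word g) : L :=
  match w with
  | [::] => 0
  | l :: w' => if w' is [::] then gen l else brL (gen l) (rn w')
  end.

Definition theta (v : V) : L := extG rn v.

Lemma theta_pre l (v : V) : v@_[::] = 0 ->
  theta (extG (pre l) v) = brL (gen l) (theta v).
Proof.
move=> hv; rewrite /theta extG_comp.
rewrite (@extG_eqh _ _ _ _ (fun k => rn (l :: k))); last by move=> k; rewrite extGU.
rewrite /extG br_sumr //.
apply: eq_big_seq => k kin; rewrite brZr //.
case: k kin => [|l' k] kin //.
by rewrite -mcoeff_neq0 hv eqxx in kin.
Qed.


Lemma zid1 (Z : zmodType) (p q : Z) : - p - ((- q - p) + (- q - p)) = p + (q + q).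
Proof.
rewrite opprD !opprB !opprK.
by rewrite -[p + q + _]addrA addKr addrCA.
Qed.

Lemma br_sumlP (I : finType) (P : pred I) (F : I -> L) w :
  brL (\sum_(i | P i) F i) w = \sum_(i | P i) brL (F i) w.
Proof.
elim/big_rec2: _ => [|i a b _ <-]; first by rewrite br0l.
by rewrite brDl.
Qed.

Lemma theta_U w : theta << w >> = rn w.
Proof. by rewrite /theta extGU. Qed.

Lemma theta_Sg w : theta (Sg w) =
  \sum_(k < g | k != i0) (rn [:: xl k, yl k & w] - rn [:: yl k, xl k & w]).
Proof.
rewrite /theta /Sg extG_sumP; apply: eq_bigr => k _.
by rewrite extGB !extGU.
Qed.

Lemma Sprime : \sum_(k < g | k != i0) brL (x k) (y k) =
  - (cc *: t) - brL (x i0) (y i0).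
Proof. by rewrite -Omega [in RHS](bigD1 i0) //= addrC addrK. Qed.


Lemma theta_X1 w : w != [::] -> eqt (theta (X1 w)) (brL (x i0) (rn w)).
Proof.
elim: w => [//|l w IH] _.
rewrite [X1 _]/=; case: ifP => [/eqP ->|hl]; last first.
  by apply: eqt_eq; rewrite theta_U.
rewrite /theta extGB -/(theta _) -/(theta _) theta_pre ?(X1_pos K i0) //.
rewrite theta_Sg.
case: w IH => [|l' w] IH.
  rewrite [X1 _]/= theta_U /=.
  have -> : \sum_(k < g | k != i0) (brL (x k) (y k) - brL (y k) (x k)) =
            \sum_(k < g | k != i0) brL (x k) (y k) + \sum_(k < g | k != i0) brL (x k) (y k).
    by rewrite -big_split /=; apply: eq_bigr => k _; rewrite (brC HL (y k)) opprK.
  rewrite Sprime (brC HL (y i0)) zid1.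
  by exists (cc + cc); rewrite [in RHS]scalerDl.
have IH' := IH isT.
set a := rn (l' :: w).
have -> : rn [:: yl i0, l' & w] = brL (y i0) a by [].
have -> : \sum_(k < g | k != i0) (rn [:: xl k, yl k, l' & w] - rn [:: yl k, xl k, l' & w])
          = - brL (brL (x i0) (y i0)) a.
  transitivity (\sum_(k < g | k != i0) brL (brL (x k) (y k)) a).
    by apply: eq_bigr => k _; rewrite -brjac2.
  rewrite -br_sumlP Sprime brBl // brNl // brZl // tcentral scaler0 oppr0 add0r.
  done.
apply: eqt_trans (eqt_sub (eqt_br (y i0) IH') (eqt_refl _)) _.
apply: eqt_eq; rewrite opprK; apply/eqP; rewrite -subr_eq0 -brjac2 //.
by rewrite addrCA subrr addr0 subrr.
Qed.


Lemma theta_extX1 v : v@_[::] = 0 -> eqt (theta (extG X1 v)) (brL (x i0) (theta v)).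
Proof.
move=> hv; rewrite /theta extG_comp {1}/extG [extG rn v]/extG br_sumr //.
apply: eqt_sum => k kin; rewrite brZr //; apply: eqt_scale.
apply: theta_X1; case: k kin => [|//] kin.
by rewrite -mcoeff_neq0 hv eqxx in kin.
Qed.

Section WithF.
Variable f : L -> Op.
Hypothesis fL : forall a u v, f (a *: u + v) = a *: f u + f v.
Hypothesis fB : forall u v, f (brL u v) = brM (f u) (f v).
Hypothesis fx : forall k, f (x k) = Xop k.
Hypothesis fy : forall k, f (y k) = Yop k.
Hypothesis ft : f t = 0.

Lemma f0 : f 0 = 0.
Proof.
have := fL 1 0 0; rewrite !scale1r !addr0.
by move/(congr1 (fun z => z - f 0)) => /=; rewrite subrr addrK => <-.
Qed.

Lemma f_pos u : posop (f u).
Proof.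
elim/Hgen: u.
- move=> v [[k ->]|[[k ->]| ->]]; first by rewrite fx; exact: Xop_pos.
    by rewrite fy; exact: Yop_pos.
  by rewrite ft; exact: posop0.
- by rewrite f0; exact: posop0.
- by move=> a u v hu hv; rewrite fL; exact: posop_lin.
- by move=> u v hu hv; rewrite fB; exact: posop_br.
Qed.

Lemma f_comm l : l != yl i0 -> forall u, comm l (f u).
Proof.
move=> hl; elim/Hgen.
- move=> v [[k ->]|[[k ->]| ->]]; first by rewrite fx; exact: Xop_app.
    by rewrite fy; exact: comm_pre.
  by rewrite ft; exact: comm0.
- by rewrite f0; exact: comm0.
- by move=> a u v hu hv; rewrite fL; exact: comm_lin.
- by move=> u v hu hv; rewrite fB; exact: comm_br.
Qed.


Section WithE.
Variable E : L -> L.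
Hypothesis EL : forall a u v, E (a *: u + v) = a *: E u + E v.
Hypothesis ED : forall u v, E (brL u v) = brL u (E v) + brL (E u) v.
Hypothesis Ex : forall k, E (x k) = x k.
Hypothesis Ey : forall k, E (y k) = y k.
Hypothesis Et : E t = 2%:R *: t.

Lemma E0 : E 0 = 0.
Proof.
have := EL 1 0 0; rewrite !scale1r !addr0.
by move/(congr1 (fun z => z - E 0)) => /=; rewrite subrr addrK => <-.
Qed.

Lemma theta0 : theta 0 = 0.
Proof. exact: extG0. Qed.

Lemma dyn u : (forall v, v@_[::] = 0 -> eqt (theta (extG (f u) v)) (brL u (theta v)))
  /\ eqt (theta (f u [::])) (E u).
Proof.
elim/Hgen: u.
- move=> v0 [[k ->]|[[k ->]| ->]].
  + rewrite fx Ex /Xop; case: ifP => [/eqP ->|hk]; split.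
    * by move=> v hv; apply: theta_extX1.
    * by apply: eqt_eq; rewrite /= theta_U.
    * by move=> v hv; rewrite theta_pre //; exact: eqt_refl.
    * by apply: eqt_eq; rewrite /pre theta_U.
  + rewrite fy Ey /Yop; split.
    * by move=> v hv; rewrite theta_pre //; exact: eqt_refl.
    * by apply: eqt_eq; rewrite /pre theta_U.
  + rewrite ft Et; split.
    * by move=> v _; rewrite extG_hzero theta0 tcentral; exact: eqt_refl.
    * by exists (- 2%:R); rewrite /= theta0 scaleNr subrr.
- rewrite f0 E0; split.
  * by move=> v _; rewrite extG_hzero theta0 br0l //; exact: eqt_refl.
  * by rewrite /= theta0; exact: eqt_refl.
- move=> a u v [hu1 hu2] [hv1 hv2]; rewrite fL EL; split.
  * move=> w hw; rewrite extG_hlinF /theta extG_lin brLl //.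
    exact: eqt_lin (hu1 _ hw) (hv1 _ hw).
  * change (eqt (theta (a *: f u [::] + f v [::])) (a *: E u + E v)).
    by rewrite /theta extG_lin; exact: eqt_lin.
- move=> u v [hu1 hu2] [hv1 hv2]; rewrite fB ED; split.
  * move=> w hw; rewrite extG_brM /theta extGB.
    apply: eqt_trans (eqt_sub (hu1 _ (ext_pos _ (f_pos v)))
                              (hv1 _ (ext_pos _ (f_pos u)))) _.
    apply: eqt_trans (eqt_sub (eqt_br u (hv1 _ hw)) (eqt_br v (hu1 _ hw))) _.
    by apply: eqt_eq; rewrite brjac2.
  * change (eqt (theta (extG (f u) (f v [::]) - extG (f v) (f u [::])))
                (brL u (E v) + brL (E u) v)).
    rewrite /theta extGB.
    apply: eqt_trans (eqt_sub (hu1 _ (f_pos v [::])) (hv1 _ (f_pos u [::]))) _.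
    apply: eqt_trans (eqt_sub (eqt_br u hv2) (eqt_br v hu2)) _.
    by apply: eqt_eq; rewrite (brC HL v (E u)) opprK.
Qed.


Lemma center_E z : (forall v, brL z v = 0) -> exists c, E z = c *: t.
Proof.
move=> hz.
have v0z : f z [::] = 0.
  apply/malgP => u; rewrite mcoeff0.
  case: u => [|h u]; first exact: f_pos.
  pose l := if h == xl i1 then yl i1 else xl i1.
  have hl : l != h.
    rewrite /l; case: (h =P xl i1) => [->|/eqP hne] //.
    by rewrite eq_sym.
  have ly : l != yl i0.
    by rewrite /l; case: ifP => _; rewrite /xl /yl xpair_eqE //= eq_sym.
  have hcomm := f_comm ly z [::].
  have fgl : f (gen l) = pre l.
    rewrite /l; case: ifP => _; rewrite /gen /= ?fy ?fx //.
    by rewrite /Xop eq_sym (negbTE hi).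
  have hbr : brM (f z) (f (gen l)) = 0 by rewrite -fB hz f0.
  have key : extG (pre l) (f z [::]) = extG (app l) (f z [::]).
    have := congr1 (fun F => F [::]) hbr; rewrite /= fgl /brM /pre extGU.
    by move/eqP; rewrite subr_eq0 => /eqP <-; rewrite -hcomm.
  have := extG_inj_coef (f z [::]) (h :: u) (rcons_injl l).
  rewrite -/(app l) -key => <-.
  rewrite rcons_cons extG_notin_coef // => k.
  by apply/eqP => -[/eqP]; rewrite (negbTE hl).
have [c hc] := (dyn z).2; rewrite v0z theta0 in hc.
exists (- c); apply/eqP; rewrite scaleNr -addr_eq0 -hc //.
Qed.

Lemma EZ a u : E (a *: u) = a *: E u.
Proof. by rewrite -[a *: u]addr0 EL E0 addr0. Qed.
Lemma ED1 u v : E (u + v) = E u + E v.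
Proof. by rewrite -[u]scale1r EL !scale1r. Qed.
Lemma E_sum (r : seq (nat * L)) (F : nat * L -> L) :
  E (\sum_(p <- r) F p) = \sum_(p <- r) E (F p).
Proof.
elim: r => [|p r IH]; first by rewrite !big_nil E0.
by rewrite !big_cons ED1 IH.
Qed.

Lemma Edecomp u : exists s : seq (nat * L), u = \sum_(p <- s) p.2 /\
  forall p, p \in s -> E p.2 = (p.1.+1)%:R *: p.2.
Proof.
elim/Hgen: u.
- move=> v0 [[k ->]|[[k ->]| ->]].
  + exists [:: (0%N, x k)]; split; first by rewrite big_seq1.
    by move=> p; rewrite inE => /eqP -> /=; rewrite Ex scale1r.
  + exists [:: (0%N, y k)]; split; first by rewrite big_seq1.
    by move=> p; rewrite inE => /eqP -> /=; rewrite Ey scale1r.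
  + exists [:: (1%N, t)]; split; first by rewrite big_seq1.
    by move=> p; rewrite inE => /eqP -> /=; rewrite Et.
- by exists [::]; split; [rewrite big_nil | move=> p; rewrite in_nil].
- move=> a u v [s1 [-> h1]] [s2 [-> h2]].
  exists ([seq (p.1, a *: p.2) | p <- s1] ++ s2); split.
    by rewrite big_cat big_map scaler_sumr.
  move=> p; rewrite mem_cat => /orP [/mapP [q qin ->] /=| pin]; last exact: h2.
  by rewrite EZ h1 // !scalerA mulrC.
- move=> u v [s1 [-> h1]] [s2 [-> h2]].
  exists [seq ((p.1 + q.1).+1, brL p.2 q.2) | p <- s1, q <- s2]; split.
    rewrite big_allpairs_dep br_suml //; apply: eq_bigr => p _.
    by rewrite br_sumr.
  move=> p /allpairsP [[p1 p2] [p1in p2in ->]] /=.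
  rewrite ED (h1 p1) // (h2 p2) // (brZr HL) (brZl HL) -scalerDl -natrD.
  by rewrite addSn addnS addnC.
Qed.


Hypothesis hK : [pchar K] =i pred0.

Lemma natr_neq0 n : (n.+1)%:R != 0 :> K.
Proof. by have := (pcharf0P _).1 hK n.+1; move=> ->. Qed.

Lemma Ezero m : forall (s : seq (nat * L)) u,
  (forall p, p \in s -> (p.1 < m)%N /\ E p.2 = (p.1.+1)%:R *: p.2) ->
  u = \sum_(p <- s) p.2 -> E u = 0 -> u = 0.
Proof.
elim: m => [|m IH] s u hs hu hE.
  case: s hs hu => [|p s] hs hu; first by rewrite hu big_nil.
  by have := hs p (mem_head _ _); case.
set N := (m.+1)%:R : K.
have hN : N != 0 by exact: natr_neq0.
have EU : E u = \sum_(p <- s) (p.1.+1)%:R *: p.2.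
  rewrite hu E_sum; apply: eq_big_seq => p pin.
  exact: (hs p pin).2.
pose s' := [seq (p.1, (1 - (p.1.+1)%:R / N) *: p.2) | p <- s & p.1 != m].
apply: (IH s') => //.
  move=> p /mapP [q]; rewrite mem_filter => /andP [qm qin] -> /=.
  have [hq1 hq2] := hs q qin.
  split; first by move: hq1; rewrite ltnS leq_eqVlt (negbTE qm).
  by rewrite EZ hq2 !scalerA mulrC.
rewrite big_map big_filter big_mkcond /=.
rewrite (eq_bigr (fun q => q.2 - N^-1 *: ((q.1.+1)%:R *: q.2))); last first.
  move=> q _; case: eqP => [->|_].
    by rewrite -/N divff // subrr scale0r scalerA mulVf // scale1r subrr.
  by rewrite scalerBl scale1r scalerA mulrC.
by rewrite sumrB -scaler_sumr -EU hE scaler0 subr0 -hu.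
Qed.

Lemma le_sum_seq (s : seq (nat * L)) p : p \in s -> (p.1 < \sum_(q <- s) q.1.+1)%N.
Proof.
elim: s => [|q s IH] //=; rewrite in_cons big_cons => /orP [/eqP ->|/IH h].
  by rewrite ltnS leq_addr.
by apply: leq_trans h _; rewrite leq_addl.
Qed.

Lemma center_in z : (forall v, brL z v = 0) -> exists c, z = c *: t.
Proof.
move=> hz; have [c hc] := center_E hz.
have h2 : (2%:R : K) != 0 by exact: natr_neq0.
exists (c / 2%:R); apply/eqP; rewrite -subr_eq0; apply/eqP.
have [s [hs he]] := Edecomp (z - (c / 2%:R) *: t).
apply: (@Ezero (\sum_(q <- s) q.1.+1) s) => //.
  by move=> p pin; split; [exact: le_sum_seq | exact: he].
rewrite ED1 -scaleNr EZ hc Et scalerA -scalerDl.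
by rewrite mulNr divfK // subrr scale0r.
Qed.

End WithE.

End WithF.

End Main.

Lemma pair_lin (K : fieldType) (W1 W2 : lmodType K) (a : K) (p q : W1 * W2) :
  a *: p + q = (a *: p.1 + q.1, a *: p.2 + q.2).
Proof. by case: p q => [p1 p2] [q1 q2]. Qed.
Lemma pair_add (K : fieldType) (W1 W2 : lmodType K) (p q : W1 * W2) :
  p + q = (p.1 + q.1, p.2 + q.2).
Proof. by case: p q => [p1 p2] [q1 q2]. Qed.
Lemma pair_scale (K : fieldType) (W1 W2 : lmodType K) (a : K) (p : W1 * W2) :
  a *: p = (a *: p.1, a *: p.2).
Proof. by case: p. Qed.
Lemma pair_opp (K : fieldType) (W1 W2 : lmodType K) (p : W1 * W2) :
  - p = (- p.1, - p.2).
Proof. by case: p. Qed.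
Lemma pair_sum (K : fieldType) (W1 W2 : lmodType K) (I : finType) (F : I -> W1 * W2) :
  \sum_i F i = (\sum_i (F i).1, \sum_i (F i).2).
Proof.
elim/big_rec3: _ => [//|i a b c _ ->].
by rewrite pair_add.
Qed.

Lemma lin0 (K : fieldType) (W1 W2 : lmodType K) (f : W1 -> W2) :
  (forall a u v, f (a *: u + v) = a *: f u + f v) -> f 0 = 0.
Proof.
move=> fL; have := fL 1 0 0; rewrite !scale1r !addr0.
by move/(congr1 (fun z => z - f 0)) => /=; rewrite subrr addrK => <-.
Qed.

Section Dual.
Variables (K : fieldType) (W : lmodType K) (br : W -> W -> W).
Hypothesis HB : is_lie_bracket br.
Definition brD (p q : W * W) : W * W := (br p.1 q.1, br p.1 q.2 + br p.2 q.1).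

Lemma brD_lie : is_lie_bracket brD.
Proof.
split.
- move=> a p q r; rewrite /brD pair_lin /= pair_lin /=.
  rewrite !(brLl HB); congr (_, _).
  by rewrite scalerDr addrACA.
- move=> a p q r; rewrite /brD pair_lin /= pair_lin /=.
  rewrite !(brLr HB); congr (_, _).
  by rewrite scalerDr addrACA.
- move=> p; rewrite /brD (bralt HB) (brC HB p.2) subrr //.
- move=> p q r; rewrite /brD /= !pair_add /=.
  rewrite (brjac HB); congr (_, _).
  rewrite !(brDr HB) !addrA.
  rewrite (@GRing.add W).[ACl ((1*5*9)*(2*6*7)*(3*4*8))].
  by rewrite !(brjac HB) !addr0.
Qed.
End Dual.

Section Heis.
Variable K : fieldType.
Definition M3 := ((K^o * K^o) * K^o)%type.
Definition brH (p q : M3) : M3 := ((0, 0), p.1.1 * q.1.2 - p.1.2 * q.1.1).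

Lemma brH_lie : is_lie_bracket brH.
Proof.
split.
- move=> a p q r; rewrite pair_lin /brH /= pair_lin /= pair_lin /=.
  congr (_, _); first by rewrite scaler0 addr0.
  rewrite /GRing.scale /=; ring.
- move=> a p q r; rewrite pair_lin /brH /= pair_lin /= pair_lin /=.
  congr (_, _); first by rewrite scaler0 addr0.
  rewrite /GRing.scale /=; ring.
- by move=> p; rewrite /brH mulrC subrr.
- have h : forall p q r, brH p (brH q r) = 0.
    by move=> p q r; rewrite /brH /= !mulr0 subrr.
  by move=> p q r; rewrite !h !addr0.
Qed.
End Heis.

Lemma brM0l (K : fieldType) (T : choiceType) (B : T -> {malg K[T]}) :
  brM 0 B = 0.
Proof.
apply/funext => w; rewrite /brM extG_hzero.
change (0 - extG B 0 = 0); by rewrite extG0 subrr.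
Qed.

Unset Implicit Arguments.
Theorem lemma8p2 (K : fieldType) (hK : [pchar K] =i pred0)
    (g : nat) (hg : (2 <= g)%N)
    (L : lmodType K) (brL : L -> L -> L) (x y : 'I_g -> L) (t : L)
    (H : is_tg1 brL x y t) :
  t != 0 /\ (forall z : L, (forall v : L, brL z v = 0) <-> exists c : K, z = c *: t).
Proof.
case: H => HL Hrel Hgen Huniv.
have hg0 : (0 < g)%N by apply: leq_trans hg.
pose i0 := Ordinal hg0; pose i1 := Ordinal hg.
have hi : i0 != i1 by [].
have cc0 : (2%:R - (2 * g)%:R : K) != 0.
  have h2 : (2 <= 2 * g)%N by lia.
  rewrite -opprB -natrB // oppr_eq0 ((pcharf0P _).1 hK).
  apply/eqP; lia.
have relsOp : tg1_relations (@brM K (word g)) (Xop K i0) (@Yop K g) 0.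
  split; [by move=> k; rewrite brM0l | by move=> k; rewrite brM0l |].
  by rewrite scaler0 oppr0 rel_rep.
have [f [fL fB fx fy ft]] := Huniv _ _ _ _ _ (brM_lie K (word g)) relsOp.
(* the degree derivation *)
have relsD : tg1_relations (brD brL) (fun k => (x k, x k)) (fun k => (y k, y k))
                 (t, 2%:R *: t).
  split.
  - move=> k; rewrite /brD /= (brZl HL) !(tcentral HL Hrel Hgen) scaler0 addr0 //.
  - move=> k; rewrite /brD /= (brZl HL) !(tcentral HL Hrel Hgen) scaler0 addr0 //.
  - rewrite pair_sum /= pair_opp pair_scale /=; congr (_, _).
      by case: Hrel.
    rewrite big_split /=; case: Hrel => _ _ ->.
    by rewrite scaler_nat -scalerMnr mulr2n opprD.
have [fE [fEL fEB fEx fEy fEt]] := Huniv _ _ _ _ _ (brD_lie HL) relsD.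
have fE1 : forall u, (fE u).1 = u.
  elim/Hgen.
  - move=> v [[k ->]|[[k ->]| ->]]; by rewrite ?fEx ?fEy ?fEt.
  - by rewrite (lin0 fEL).
  - by move=> a u v hu hv; rewrite fEL pair_lin /= hu hv.
  - by move=> u v hu hv; rewrite fEB /brD /= hu hv.
pose E u := (fE u).2.
have EL : forall a u v, E (a *: u + v) = a *: E u + E v.
  by move=> a u v; rewrite /E fEL pair_lin.
have ED : forall u v, E (brL u v) = brL u (E v) + brL (E u) v.
  by move=> u v; rewrite /E fEB /brD /= !fE1.
have Ex : forall k, E (x k) = x k by move=> k; rewrite /E fEx.
have Ey : forall k, E (y k) = y k by move=> k; rewrite /E fEy.
have Et : E t = 2%:R *: t by rewrite /E fEt.
split.
- (* t != 0 via the Heisenberg algebra *)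
  pose x' k : M3 K := if k == i0 then ((1, 0), 0) else 0.
  pose y' k : M3 K := if k == i0 then ((0, 1), 0) else 0.
  pose t' : M3 K := ((0, 0), - (2%:R - (2 * g)%:R)^-1).
  have relsH : tg1_relations (@brH K) x' y' t'.
    split.
    - by move=> k; rewrite /brH /t' /= !mul0r subrr.
    - by move=> k; rewrite /brH /t' /= !mul0r subrr.
    - rewrite (bigD1 i0) //= big1 => [|k kn]; last first.
        by rewrite /x' (negbTE kn) /brH /= !mul0r subrr.
      rewrite /x' /y' eqxx /brH /t' /= addr0 pair_opp pair_scale /=.
      rewrite pair_scale /= !scaler0 oppr0 mulr1 mulr0 subr0.
      congr (_, _); rewrite /GRing.scale /= mulrN opprK divff //.
  have [fH [fHL _ _ _ fHt]] := Huniv _ _ _ _ _ (@brH_lie K) relsH.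
  apply/eqP => t0; move: fHt; rewrite t0 (lin0 fHL) /t' => /(congr1 snd) /=.
  move/eqP; rewrite eq_sym oppr_eq0 invr_eq0.
  by rewrite (negbTE cc0).
- move=> z; split.
    exact: (center_in hi HL Hrel Hgen fL fB fx fy ft EL ED Ex Ey Et hK).
  by move=> [c ->] v; rewrite (brZl HL) (tcentral HL Hrel Hgen) scaler0.
Qed.
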